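(* Let $\mathcal Y\subset\mathbb R^d$ be a finite set such that no element of $\mathcal Y$ is a strict convex combination of other elements of $\mathcal Y$, let $\kappa>0$, let $\xi_1,\dots,\xi_N$ be noise samples and $c:\mathcal Y\times\Xi\to\mathbb R$ a cost, and set $\gamma_i=(c(y,\xi_i))_{y\in\mathcal Y}\in\mathbb R^{\mathcal Y}$. Let $\Omega_\Delta$ be a proper lower-semicontinuous convex function on $\mathbb R^{\mathcal Y}$ with domain $\Delta^{\mathcal Y}$ whose restriction to the affine hull $H_\Delta$ of $\Delta^{\mathcal Y}$ is Legendre-type, and suppose $\Omega_\Delta=\Psi_\Delta+\mathbb I_{\Delta^{\mathcal Y}}$ with $\Psi_\Delta$ a Legendre-type function. Assume that the Jensen gap of $\Psi_\Delta$, $$q_\otimes=(q_1,\dots,q_N)\mapsto \frac1N\sum_{i=1}^N\Psi_\Delta(q_i)-\Psi_\Delta\Big(\frac1N\sum_{i=1}^N q_i\Big),$$ is convex on $\Delta_\otimes=(\Delta^{\mathcal Y})^N$. Consider the alternating scheme: choose $\bar s^{(0)}_\otimes\in\bar S_\otimes$, and for $t\ge0$ let $$q_\otimes^{(t+1)}=\operatorname*{argmin}_{q_\otimes\in\Delta_\otimes}\mathcal S_{N}(\bar s_\otimes^{(t)},q_\otimes),\qquad \bar s_\otimes^{(t+1)}\in\operatorname*{argmin}_{s_\otimes\in\bar S_\otimes}\mathcal S_{N}(s_\otimes,q_\otimes^{(t+1)}).$$ Then the iterates converge in value to the global minimum of $\mathcal S_N$ over $\bar S_\otimes\times\Delta_\otimes$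 with rate $\mathcal O(1/t)$, i.e. $\mathcal S_N(\bar s_\otimes^{(t)},q_\otimes^{(t)})-\inf_{\bar S_\otimes\times\Delta_\otimes}\mathcal S_N=\mathcal O(1/t)$.
   Context: $\Delta^{\mathcal Y}=\{q\in\mathbb R^{\mathcal Y}:q\ge0,\ \sum_y q_y=1\}$; $\mathbb I_A$ is the indicator function of $A$ (0 on $A$, $+\infty$ elsewhere). A function $\Psi:\mathbb R^m\to\mathbb R\cup\{+\infty\}$ is Legendre-type if it is strictly convex on $\operatorname{int}(\operatorname{dom}\Psi)$ and essentially smooth: $\operatorname{int}(\operatorname{dom}\Psi)\neq\emptyset$, $\Psi$ is differentiable on it, and $\|\nabla\Psi(\mu)\|\to+\infty$ as $\mu$ tends to the boundary of $\operatorname{dom}\Psi$; for the restriction to an affine subspace $H$ this is understood with respect to the induced metric of $H$. The Fenchel–Young loss is $\mathcal L_{\Omega_\Delta}(s;q)=\Omega_\Delta(q)+\Omega_\Delta^*(s)-\langle s|q\rangle$, with $\Omega_\Delta^*(s)=\sup_q\langle s|q\rangle-\Omega_\Delta(q)$. Define $S(s,q;\xi_i)=\langle\gamma_i|q\rangle+\kappa\mathcal L_{\Omega_\Delta}(s;q)$, $\bar S_\otimes=\{(s_1,\dots,s_N)\in(\mathbb R^{\mathcal Y})^N: s_1=\dots=s_N\}$, and $\mathcal S_N(s_\otimes,q_\otimes)=\frac1N\sum_{i=1}^N S(s_i,q_i;\xi_i)$. *)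

(* Defs.v *)
From HB Require Import structures.
From mathcomp Require Import all_boot all_order all_algebra.
From mathcomp Require Import all_classical all_reals all_analysis.
Set Implicit Arguments. Unset Strict Implicit. Unset Printing Implicit Defensive.
Import Order.TTheory GRing.Theory Num.Theory.
Import numFieldNormedType.Exports.
Local Open Scope classical_set_scope.
Local Open Scope ring_scope.

Section Defs.
Variable R : realType.

(* Vectors of R^Y, with Y indexed by 'I_m, are row vectors 'rV[R]_m. *)

Definition dotv m (u v : 'rV[R]_m) : R := \sum_(j < m) u ord0 j * v ord0 j.
Definition enorm m (v : 'rV[R]_m) : R := Num.sqrt (dotv v v).

Definition Delta m : set 'rV[R]_m :=
  [set q | (forall j, 0 <= q ord0 j) /\ \sum_(j < m) q ord0 j = 1].
Definition H_Delta m : set 'rV[R]_m := [set q | \sum_(j < m) q ord0 j = 1].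
Definition L_Delta m : set 'rV[R]_m := [set v | \sum_(j < m) v ord0 j = 0].

Definition ind_set m (A : set 'rV[R]_m) (x : 'rV[R]_m) : \bar R :=
  if pselect (A x) then 0%E else +oo%E.

Definition dom m (f : 'rV[R]_m -> \bar R) : set 'rV[R]_m := [set x | (f x < +oo)%E].

Definition proper_fun m (f : 'rV[R]_m -> \bar R) :=
  (exists x, (f x < +oo)%E) /\ (forall x, (-oo < f x)%E).

Definition lsc_fun m (f : 'rV[R]_m -> \bar R) :=
  forall a : R, closed [set x | (f x <= a%:E)%E].

Definition convex_fun m (f : 'rV[R]_m -> \bar R) :=
  forall (x y : 'rV[R]_m) (t : R), (f x < +oo)%E -> (f y < +oo)%E -> 0 <= t <= 1 ->
    (f (t *: x + (1 - t) *: y)%R <= t%:E * f x + (1 - t)%R%:E * f y)%E.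

Definition rint m (H S : set 'rV[R]_m) : set 'rV[R]_m :=
  [set x | S x /\ H x /\ exists2 e : R, 0 < e &
     forall z, H z -> enorm (z - x) < e -> S z].

(* g (in the direction space L) is the gradient at x of the restriction of f
   to the affine subspace x + L, w.r.t. the induced Euclidean metric *)
Definition rel_grad m (L : set 'rV[R]_m) (f : 'rV[R]_m -> \bar R) (x g : 'rV[R]_m) :=
  L g /\ f x \is a fin_num /\
  forall e : R, 0 < e -> exists2 d : R, 0 < d & forall v, L v -> enorm v < d ->
    f (x + v) \is a fin_num /\
    `| fine (f (x + v)) - fine (f x) - dotv g v | <= e * enorm v.

(* Legendre-type for the restriction of f to the affine subspace H, whose
   direction space is L.  For H = L = setT this is the usual notion on R^m. *)
Definition legendre_on m (H L : set 'rV[R]_m) (f : 'rV[R]_m -> \bar R) :=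
  let I := rint H (dom f) in
  (forall (x y : 'rV[R]_m) (t : R), I x -> I y -> x != y -> 0 < t < 1 ->
     (f (t *: x + (1 - t) *: y)%R < t%:E * f x + (1 - t)%R%:E * f y)%E) /\
  (I !=set0) /\
  (forall x, I x -> exists g, rel_grad L f x g) /\
  (forall (u G : nat -> 'rV[R]_m) (b : 'rV[R]_m),
     (forall k, I (u k)) -> (forall k, rel_grad L f (u k) (G k)) ->
     u @ \oo --> b -> ~ I b ->
     forall M : R, exists K : nat, forall k, (K <= k)%N -> M < enorm (G k)).

Definition legendre m (f : 'rV[R]_m -> \bar R) := legendre_on setT setT f.

Definition Delta_ot N m : set ('I_N -> 'rV[R]_m) := [set q | forall i, @Delta m (q i)].
Definition Sbar_ot N m : set ('I_N -> 'rV[R]_m) := [set s | forall i j, s i = s j].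

Definition jensen_gap N m (Psi : 'rV[R]_m -> \bar R) (q : 'I_N -> 'rV[R]_m) : \bar R :=
  ((N%:R^-1)%:E * (\sum_(i < N) Psi (q i)) - Psi (N%:R^-1 *: \sum_(i < N) q i)%R)%E.

Definition convex_on_Delta_ot N m (J : ('I_N -> 'rV[R]_m) -> \bar R) :=
  forall (q q' : 'I_N -> 'rV[R]_m) (t : R), @Delta_ot N m q -> @Delta_ot N m q' ->
    0 <= t <= 1 ->
    (J (fun i => (t *: q i + (1 - t) *: q' i)%R) <= t%:E * J q + (1 - t)%R%:E * J q')%E.

Definition fconj m (Om : 'rV[R]_m -> \bar R) (s : 'rV[R]_m) : \bar R :=
  ereal_sup [set ((dotv s q)%:E - Om q)%E | q in [set: 'rV[R]_m]].

Definition FY m (Om : 'rV[R]_m -> \bar R) (s q : 'rV[R]_m) : \bar R :=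
  (Om q + fconj Om s - (dotv s q)%:E)%E.

Definition Sfun m (Om : 'rV[R]_m -> \bar R) (kappa : R) (gam s q : 'rV[R]_m) : \bar R :=
  ((dotv gam q)%:E + kappa%:E * FY Om s q)%E.

Definition SN N m (Om : 'rV[R]_m -> \bar R) (kappa : R) (gam : 'I_N -> 'rV[R]_m)
  (s q : 'I_N -> 'rV[R]_m) : \bar R :=
  ((N%:R^-1)%:E * \sum_(i < N) Sfun Om kappa (gam i) (s i) (q i))%E.

End Defs.

(* Main.v *)
Require Import Defs.
From HB Require Import structures.
From mathcomp Require Import all_boot all_order all_algebra.
From mathcomp Require Import all_classical all_reals all_analysis.
From mathcomp Require Import ring lra.
Import Order.TTheory GRing.Theory Num.Theory.
Import numFieldNormedType.Exports.
Local Open Scope classical_set_scope.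
Local Open Scope ring_scope.
Set Implicit Arguments. Unset Strict Implicit. Unset Printing Implicit Defensive.
Section Vec.
Variable R : realType.
Variable m : nat.
Implicit Types u v w p : 'rV[R]_m.

Lemma dotvC u v : dotv u v = dotv v u.
Proof. by rewrite /dotv; apply: eq_bigr => j _; rewrite mulrC. Qed.

Lemma dotvDr u v w : dotv u (v + w) = dotv u v + dotv u w.
Proof. by rewrite /dotv -big_split; apply: eq_bigr => j _; rewrite mxE mulrDr. Qed.

Lemma dotvZr a u v : dotv u (a *: v) = a * dotv u v.
Proof. by rewrite /dotv mulr_sumr; apply: eq_bigr => j _; rewrite mxE mulrCA. Qed.

Lemma dotvNr u v : dotv u (- v) = - dotv u v.
Proof. by rewrite -scaleN1r dotvZr mulN1r. Qed.

Lemma dotvBr u v w : dotv u (v - w) = dotv u v - dotv u w.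
Proof. by rewrite dotvDr dotvNr. Qed.

Lemma dotvDl u v w : dotv (v + w) u = dotv v u + dotv w u.
Proof. by rewrite dotvC dotvDr !(dotvC u). Qed.

Lemma dotvZl a u v : dotv (a *: v) u = a * dotv v u.
Proof. by rewrite dotvC dotvZr dotvC. Qed.

Lemma dotvBl u v w : dotv (v - w) u = dotv v u - dotv w u.
Proof. by rewrite dotvC dotvBr !(dotvC u). Qed.

Lemma dotv0r u : dotv u 0 = 0.
Proof. by rewrite -(scale0r 0) dotvZr mul0r. Qed.

Lemma dotv_sumr n u (f : 'I_n -> 'rV[R]_m) :
  dotv u (\sum_(i < n) f i) = \sum_(i < n) dotv u (f i).
Proof.
rewrite /dotv exchange_big; apply: eq_bigr => j _.
by rewrite summxE mulr_sumr.
Qed.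

Lemma dotv_ge0 u : 0 <= dotv u u.
Proof. by apply: sumr_ge0 => j _; rewrite -expr2 sqr_ge0. Qed.

Lemma enorm_ge0 u : 0 <= enorm u.
Proof. exact: sqrtr_ge0. Qed.

Lemma enormZ a u : enorm (a *: u) = `|a| * enorm u.
Proof.
rewrite /enorm dotvZr dotvZl mulrA -expr2 sqrtrM ?sqr_ge0 //.
by rewrite sqrtr_sqr.
Qed.

Lemma coord_le_enorm u j : `|u ord0 j| <= enorm u.
Proof.
rewrite /enorm -(sqrtr_sqr (u ord0 j)) ler_sqrt ?dotv_ge0 //.
rewrite /dotv (bigD1 j) //= -expr2 lerDl.
by apply: sumr_ge0 => k _; rewrite -expr2 sqr_ge0.
Qed.

Lemma enorm_lt_sq u e : 0 < e -> dotv u u < e ^+ 2 -> enorm u < e.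
Proof.
move=> e0 h; rewrite /enorm -(ger0_norm (ltW e0)) -sqrtr_sqr.
by rewrite ltr_sqrt // exprn_gt0.
Qed.

Definition Delta_coord_le1 p j : Delta p -> p ord0 j <= 1.
Proof.
move=> [p0 p1]; rewrite -p1 (bigD1 j) //= lerDl.
by apply: sumr_ge0.
Qed.

Lemma dotv_Delta_le u p : Delta p -> `|dotv u p| <= \sum_j `|u ord0 j|.
Proof.
move=> Dp; rewrite /dotv; apply: (le_trans (ler_norm_sum _ _ _)).
apply: ler_sum => j _; rewrite normrM.
rewrite -[X in _ <= X]mulr1; apply: ler_wpM2l => //.
by rewrite ger0_norm ?(Dp.1 j) // Delta_coord_le1.
Qed.

Lemma Delta_convex p1 p2 t : Delta p1 -> Delta p2 -> 0 <= t <= 1 ->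
  Delta (t *: p1 + (1 - t) *: p2).
Proof.
move=> [a1 b1] [a2 b2] /andP[t0 t1]; split.
  move=> j; rewrite !mxE; apply: addr_ge0; apply: mulr_ge0 => //.
  by rewrite subr_ge0.
rewrite (eq_bigr (fun j => t * p1 ord0 j + (1 - t) * p2 ord0 j)); last first.
  by move=> j _; rewrite !mxE.
by rewrite big_split /= -!mulr_sumr b1 b2 !mulr1 addrC subrK.
Qed.

Lemma Delta_H p : Delta p -> H_Delta p.
Proof. by case. Qed.

Lemma H_L p1 p2 : H_Delta p1 -> H_Delta p2 -> L_Delta (p1 - p2).
Proof.
rewrite /H_Delta /L_Delta /= => h1 h2.
rewrite (eq_bigr (fun j => p1 ord0 j - p2 ord0 j)); last by move=> j _; rewrite !mxE.
by rewrite sumrB h1 h2 subrr.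
Qed.

Lemma HL_H p v : H_Delta p -> L_Delta v -> H_Delta (p + v).
Proof.
rewrite /H_Delta /L_Delta /= => h1 h2.
rewrite (eq_bigr (fun j => p ord0 j + v ord0 j)); last by move=> j _; rewrite !mxE.
by rewrite big_split /= h1 h2 addr0.
Qed.

Lemma L_Z a v : L_Delta v -> L_Delta (a *: v).
Proof.
rewrite /L_Delta /= => h.
rewrite (eq_bigr (fun j => a * v ord0 j)); last by move=> j _; rewrite !mxE.
by rewrite -mulr_sumr h mulr0.
Qed.

End Vec.
Definition evec {R : realType} {m : nat} (j : 'I_m) : 'rV[R]_m := \row_k (k == j)%:R.
Definition cvec (R : realType) m : 'rV[R]_m := \row_k (m%:R^-1).

Lemma dotv_evec (R : realType) m (g : 'rV[R]_m) j : dotv g (evec j) = g ord0 j.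
Proof.
rewrite /dotv (bigD1 j) //= big1 => [|k kj]; first by rewrite mxE eqxx mulr1 addr0.
by rewrite mxE (negbTE kj) mulr0.
Qed.

Lemma evec_Delta (R : realType) m (j : 'I_m) : Delta (evec (R:=R) (m:=m) j).
Proof.
split=> [k|]; first by rewrite mxE ler0n.
rewrite (bigD1 j) //= big1 => [|k kj]; first by rewrite mxE eqxx addr0.
by rewrite mxE (negbTE kj).
Qed.

Lemma dotv_cvec (R : realType) m (g : 'rV[R]_m) : L_Delta g -> dotv g (cvec R m) = 0.
Proof.
rewrite /L_Delta /= => h; rewrite /dotv.
rewrite (eq_bigr (fun j => g ord0 j * m%:R^-1)); last by move=> j _; rewrite mxE.
by rewrite -mulr_suml h mul0r.
Qed.

Lemma I_pos (R : realType) m (p : 'rV[R]_m) j :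
  rint (@H_Delta R m) (@Delta R m) p -> 0 < p ord0 j.
Proof.
move=> [Dp [Hp [e e0 he]]].
rewrite lt_neqAle (Dp.1 j) andbT; apply/negP => /eqP pj0.
set w := evec j - p.
have Lw : L_Delta w by apply: H_L => //; exact: (@evec_Delta R m j).2.
set d := e / (enorm w + 1).
have d0 : 0 < d by rewrite divr_gt0 // ltr_wpDl ?enorm_ge0.
have : Delta (p + (- d) *: w).
  apply: he; first by apply: HL_H => //; exact: L_Z.
  rewrite addrC addKr enormZ normrN gtr0_norm // /d.
  rewrite mulrAC ltr_pdivrMr ?ltr_wpDl ?enorm_ge0 //.
  by rewrite ltr_pM2l // ltrDl.
move=> [/(_ j)]; rewrite !mxE -pj0 add0r eqxx subr0 mulr1 oppr_ge0.
by rewrite leNgt d0.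
Qed.

Lemma pos_I (R : realType) m (p : 'rV[R]_m) :
  H_Delta p -> (forall j, 0 < p ord0 j) -> rint (@H_Delta R m) (@Delta R m) p.
Proof.
move=> Hp pos.
have Dp : Delta p by split => // j; exact: ltW.
split=> //; split=> //.
case: m p Hp pos Dp => [|n] p Hp pos Dp.
  by move: Hp; rewrite /H_Delta /= big_ord0 => /esym/eqP; rewrite oner_eq0.
set S := \sum_(j < n.+1) (p ord0 j)^-1.
have S0 : 0 < S.
  rewrite /S (bigD1 ord0) //= ltr_wpDr ?invr_gt0 //.
  by apply: sumr_ge0 => k _; rewrite invr_ge0 ltW.
exists S^-1; first by rewrite invr_gt0.
have le_p j : S^-1 <= p ord0 j.
  rewrite -[X in _ <= X]invrK lef_pV2 ?posrE ?invr_gt0 //.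
  by rewrite /S (bigD1 j) //= lerDl; apply: sumr_ge0 => k _; rewrite invr_ge0 ltW.
move=> z Hz nz; split=> // j.
have := coord_le_enorm (z - p) j; rewrite !mxE => hj.
have : `|z ord0 j - p ord0 j| < p ord0 j by apply: (le_lt_trans hj); apply: (lt_le_trans nz).
rewrite ltr_norml => /andP[+ _]; rewrite ltrBrDr addNr => /ltW //.
Qed.
Section OmSec.
Variable (R : realType) (m : nat) (Om : 'rV[R]_m -> \bar R).
Hypothesis Hcvx : convex_fun Om.
Hypothesis Hdom : dom Om = @Delta R m.
Hypothesis Hleg : legendre_on (@H_Delta R m) (@L_Delta R m) Om.
Hypothesis Hninf : forall x, (-oo < Om x)%E.

Implicit Types (p x y z u g b : 'rV[R]_m).
Local Notation I := (rint (@H_Delta R m) (@Delta R m)).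
Definition om (p : 'rV[R]_m) : R := fine (Om p).

Lemma OmE p : Delta p -> Om p = (om p)%:E.
Proof.
move=> Dp; have : dom Om p by rewrite Hdom.
by rewrite /dom /= => h; rewrite /om fineK // fin_numElt Hninf h.
Qed.

Lemma OmNE p : ~ Delta p -> Om p = +oo%E.
Proof.
move=> nD; apply/eqP/negPn/negP => h; apply: nD.
by rewrite -Hdom /dom /= ltey.
Qed.

Lemma om_convex x y t : Delta x -> Delta y -> 0 <= t <= 1 ->
  om (t *: x + (1 - t) *: y) <= t * om x + (1 - t) * om y.
Proof.
move=> Dx Dy ht; have := @Hcvx x y t.
rewrite (OmE Dx) (OmE Dy) (OmE (Delta_convex Dx Dy ht)).
by move=> /(_ (ltry _) (ltry _) ht); rewrite -!EFinM -EFinD lee_fin.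
Qed.

Lemma leg_grad x : I x -> exists g, rel_grad (@L_Delta R m) Om x g.
Proof. by move: Hleg; rewrite /legendre_on Hdom => -[_ [_ [h _]]]; exact: h. Qed.

Lemma leg_blow (u G : nat -> 'rV[R]_m) (b : 'rV[R]_m) :
  (forall k, I (u k)) -> (forall k, rel_grad (@L_Delta R m) Om (u k) (G k)) ->
  u @ \oo --> b -> ~ I b ->
  forall M : R, exists K : nat, forall k, (K <= k)%N -> M < enorm (G k).
Proof. by move: Hleg; rewrite /legendre_on Hdom => -[_ [_ [_ h]]]; exact: h. Qed.

Lemma grad_ineq u g z : I u -> rel_grad (@L_Delta R m) Om u g -> Delta z ->
  om u + dotv g (z - u) <= om z.
Proof.
move=> Iu [Lg [_ hg]] Dz.
have Du := Iu.1.
set w := z - u.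
have Lw : L_Delta w by apply: H_L; [exact: Dz.2 | exact: Du.2].
rewrite -lerBrDl; apply/ler_addgt0Pr => e e0.
have nw0 := enorm_ge0 w.
set e' := e / (enorm w + 1).
have e'0 : 0 < e' by rewrite divr_gt0 // ltr_wpDl.
have e'w : e' * enorm w <= e.
  rewrite /e' mulrAC ler_pdivrMr ?ltr_wpDl //.
  by rewrite ler_pM2l // lerDl.
have [d d0 hd] := hg e' e'0.
set l := d / (d + enorm w).
have l0 : 0 < l by rewrite divr_gt0 // ltr_wpDr.
have l1 : l <= 1 by rewrite ler_pdivrMr ?ltr_wpDr // mul1r lerDl.
have Lv : L_Delta (l *: w) by exact: L_Z.
have nv : enorm (l *: w) < d.
  rewrite enormZ gtr0_norm // /l mulrAC ltr_pdivrMr ?ltr_wpDr //.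
  by rewrite ltr_pM2l // ltrDr.
have [_ hv] := hd _ Lv nv.
have eq1 : u + l *: w = l *: z + (1 - l) *: u.
  by rewrite /w scalerBr scalerBl scale1r addrCA.
have lb : 0 <= l <= 1 by rewrite l1 ltW.
have cv := om_convex Dz Du lb.
rewrite -eq1 in cv.
rewrite dotvZr enormZ (gtr0_norm l0) in hv.
move: hv; rewrite ler_norml => /andP[h _].
have h1 : l * dotv g w <= l * (om z - om u + e' * enorm w).
  rewrite /om in cv *; nra.
rewrite ler_pM2l // in h1.
by apply: (le_trans h1); rewrite lerD2l.
Qed.
Lemma cvec_I : (0 < m)%N -> I (cvec R m).
Proof.
move=> m0; apply: pos_I => [|j]; last by rewrite mxE invr_gt0 ltr0n.
rewrite /H_Delta /= (eq_bigr (fun _ => m%:R^-1)); last by move=> j _; rewrite mxE.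
by rewrite sumr_const card_ord -(mulr_natl (m%:R^-1) m) mulfV // pnatr_eq0 -lt0n.
Qed.

Lemma Delta_m0 p : Delta p -> (0 < m)%N.
Proof.
move=> [_ h]; case: (posnP m) => // m0; exfalso.
have : \sum_(j < m) p ord0 j = 0.
  by apply: big1 => j; have := ltn_ord j; rewrite {2}m0.
by rewrite h => /eqP; rewrite oner_eq0.
Qed.

Lemma min_in_I x b : Delta x ->
  (forall p, Delta p -> om x - dotv b x <= om p - dotv b p) -> I x.
Proof.
move=> Dx hmin.
have m0 := Delta_m0 Dx.
case: (pselect (I x)) => // nIx; exfalso.
set c := cvec R m.
have Ic := cvec_I m0.
set u := fun k : nat => x + harmonic k *: (c - x).
have hl0 k : 0 < harmonic k :> R by exact: harmonic_gt0.
have hl1 k : harmonic k <= 1 :> R.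
  by rewrite /harmonic /= invf_le1 ?ltr0n // ler1n.
have Iu k : I (u k).
  apply: pos_I => [|j].
    apply: HL_H; first exact: Dx.2.
    by apply: L_Z; apply: H_L; [exact: Ic.1.2 | exact: Dx.2].
  rewrite /u !mxE.
  have := hl0 k; have := hl1 k; have := Dx.1 j.
  have : 0 < m%:R^-1 :> R by rewrite invr_gt0 ltr0n.
  move: (harmonic k) (x ord0 j) (m%:R^-1 : R) => l a z z0 a0 l1 l0.
  have -> : a + l * (z - a) = (1 - l) * a + l * z by ring.
  by rewrite ltr_wpDl ?mulr_ge0 ?subr_ge0 // mulr_gt0.
have [G hG] := choice (fun k => leg_grad (Iu k)).
have cvu : u @ \oo --> x.
  have h1 : (fun k => harmonic k *: (c - x)) @ \oo --> (0 : R) *: (c - x).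
    exact: (cvgZr_tmp (a := c - x) (@cvg_harmonic R)).
  have h2 := cvgD (cvg_cst x) h1.
  rewrite scale0r addr0 in h2.
  by apply: h2; exact: eventually_filter.
set bx := dotv b x; set bc := dotv b c.
set K := \sum_j `|om (evec j)| + `|om x| + `|bc - bx|.
have K0 : 0 <= K by rewrite !addr_ge0 ?sumr_ge0.
have bound k : dotv (G k) (G k) <= m%:R * (m%:R * K) ^+ 2.
  have [Lg _] := hG k.
  have i1 := grad_ineq (Iu k) (hG k) Dx.
  have i2 := hmin _ (Iu k).1.
  have l0 := hl0 k; have l1 := hl1 k.
  have gc : dotv (G k) c = 0 by exact: dotv_cvec.
  have gu : dotv (G k) (u k) = dotv (G k) x + harmonic k * (0 - dotv (G k) x).
    by rewrite /u dotvDr dotvZr dotvBr gc.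
  have bu : dotv b (u k) = bx + harmonic k * (bc - bx) by rewrite /u dotvDr dotvZr dotvBr.
  rewrite dotvBr gu in i1; rewrite bu in i2.
  have i3 j : om (u k) + ((G k) ord0 j - (dotv (G k) x + harmonic k * (0 - dotv (G k) x)))
      <= om (evec j).
    by have := grad_ineq (Iu k) (hG k) (@evec_Delta R m j); rewrite dotvBr gu dotv_evec.
  set l := (harmonic k : R) in l0 l1 i1 i2 i3 *.
  set g := G k in Lg i1 i3 *.
  set gx := dotv g x in i1 i3 *.
  set ou := om (u k) in i1 i2 i3 *.
  rewrite -/bx in i2.
  have hgx : gx <= - (bc - bx).
    have : l * (gx + (bc - bx)) <= 0 by nra.
    by rewrite pmulr_rle0 // -lerBrDr sub0r.
  have hj j : g ord0 j <= K.
    have i3j := i3 j.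
    have h4 : 0 <= (1 - l) * (- (bc - bx) - gx) by rewrite mulr_ge0 // subr_ge0.
    have h5 : om (evec j) <= \sum_j `|om (evec j)|.
      by rewrite (bigD1 j) //= (le_trans (ler_norm _)) // lerDl sumr_ge0.
    have h6 : - om x <= `|om x| by rewrite -normrN ler_norm.
    have h7 : - (bc - bx) <= `|bc - bx| by rewrite -normrN ler_norm.
    rewrite /K; nra.
  have mK : K <= m%:R * K by rewrite ler_peMl // ler1n.
  have hj2 j : `|g ord0 j| <= m%:R * K.
    rewrite ler_norml (le_trans (hj j) mK) andbT.
    have : \sum_i g ord0 i = 0 by exact: Lg.
    rewrite (bigD1 j) //= => /eqP; rewrite addr_eq0 => /eqP ->.
    rewrite lerN2.
    apply: (le_trans (y := \sum_(i | i != j) K)); first by apply: ler_sum => i _; exact: hj.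
    have sK : \sum_(i < m) K = m%:R * K by rewrite sumr_const card_ord mulr_natl.
    by rewrite -sK [X in _ <= X](bigD1 j) //= ler_wpDl.
  have sK : \sum_(i < m) (m%:R * K) ^+ 2 = m%:R * (m%:R * K) ^+ 2.
    by rewrite sumr_const card_ord (mulr_natl ((m%:R * K) ^+ 2) m).
  rewrite /dotv -sK.
  apply: ler_sum => j _; have := hj2 j; rewrite ler_norml => /andP[a1 a2].
  nra.
have [k0 hk0] := leg_blow Iu hG cvu nIx (Num.sqrt (m%:R * (m%:R * K) ^+ 2)).
have := hk0 k0 (leqnn _); rewrite /enorm.
have sq0 := sqrtr_ge0 (m%:R * (m%:R * K) ^+ 2).
move=> h; have := h; rewrite ltr_sqrt; last first.
  by rewrite -sqrtr_gt0; apply: le_lt_trans h.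
by rewrite ltNge bound.
Qed.
Hypothesis Hm : (0 < m)%N.

Definition os (s : 'rV[R]_m) : R := fine (fconj Om s).

Lemma fconj_ub s : exists U : R, forall q, ((dotv s q)%:E - Om q <= U%:E)%E.
Proof.
have [g0 hg0] := leg_grad (cvec_I Hm).
set c := cvec R m.
exists (\sum_j `|(s - g0) ord0 j| - om c + dotv g0 c) => q.
case: (pselect (Delta q)) => Dq; last first.
  by rewrite (OmNE Dq) /= leNye.
rewrite (OmE Dq) -EFinB lee_fin.
have := grad_ineq (cvec_I Hm) hg0 Dq; rewrite -/c dotvBr => h.
have := dotv_Delta_le (s - g0) Dq; rewrite dotvBl => /ler_normlW h2.
lra.
Qed.

Lemma fconj_lb s p : Delta p -> ((dotv s p - om p)%:E <= fconj Om s)%E.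
Proof.
move=> Dp; apply: ereal_sup_ubound; exists p => //.
by rewrite (OmE Dp).
Qed.

Lemma fconj_fin s : fconj Om s \is a fin_num.
Proof.
have [U hU] := fconj_ub s.
rewrite fin_numElt; apply/andP; split.
  exact: (lt_le_trans (ltNyr _) (fconj_lb s (cvec_I Hm).1)).
apply: (le_lt_trans _ (ltry U)); apply: ge_ereal_sup => _ [q _ <-]; exact: hU.
Qed.

Lemma fconjE s : fconj Om s = (os s)%:E.
Proof. by rewrite /os fineK // fconj_fin. Qed.

Lemma os_lb s p : Delta p -> dotv s p - om p <= os s.
Proof. by move=> Dp; rewrite -lee_fin -fconjE; exact: fconj_lb. Qed.

Lemma os_grad u g : I u -> rel_grad (@L_Delta R m) Om u g -> os g = dotv g u - om u.
Proof.
move=> Iu hg; apply/eqP; rewrite eq_le (os_lb g Iu.1) andbT.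
rewrite -lee_fin -fconjE; apply: ge_ereal_sup => _ [q _ <-].
case: (pselect (Delta q)) => Dq; last by rewrite (OmNE Dq) /= leNye.
rewrite (OmE Dq) -EFinB lee_fin.
have := grad_ineq Iu hg Dq; rewrite dotvBr; lra.
Qed.
Lemma om_ub : exists M, forall p, Delta p -> om p <= M.
Proof.
set Mx := \sum_j `|om (evec j)|.
have hMx j : om (evec j) <= Mx.
  by rewrite /Mx (bigD1 j) //= (le_trans (ler_norm _)) // lerDl sumr_ge0.
exists Mx.
suff H k : forall p, Delta p -> (forall j : 'I_m, (k <= j)%N -> p ord0 j = 0) -> om p <= Mx.
  by move=> p Dp; apply: (H m) => // j; rewrite leqNgt ltn_ord.
elim: k => [|k IH] p Dp hs.
  exfalso; have : \sum_(j < m) p ord0 j = 0 by apply: big1 => j _; exact: hs.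
  by rewrite Dp.2 => /eqP; rewrite oner_eq0.
case: (ltnP k m) => km; last first.
  apply: IH => // j kj; exfalso; have := ltn_ord j.
  by rewrite ltnNge (leq_trans km kj).
set jk : 'I_m := Ordinal km.
set t := p ord0 jk.
have t0 : 0 <= t := Dp.1 jk.
have t1 : t <= 1 := Delta_coord_le1 jk Dp.
have hsum : t + \sum_(i | i != jk) p ord0 i = 1 by case: Dp => _; rewrite (bigD1 jk).
case: (eqVneq t 1) => [t_1 | t_n1].
  have -> : p = evec jk.
    apply/rowP => j; rewrite mxE; case: (eqVneq j jk) => [->|njk] /=.
      by rewrite -/t t_1.
    have hs0 : \sum_(i | i != jk) p ord0 i = 0 by move: hsum; rewrite t_1; lra.
    by have := psumr_eq0P (fun i _ => Dp.1 i) hs0 njk.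
  exact: hMx.
have t1' : t < 1 by rewrite lt_neqAle t_n1.
have ht : 0 < 1 - t by rewrite subr_gt0.
set p' := (1 - t)^-1 *: (p - t *: evec jk).
have p'E j : p' ord0 j = (1 - t)^-1 * (p ord0 j - t * (j == jk)%:R).
  by rewrite /p' !mxE.
have p'jk : p' ord0 jk = 0 by rewrite p'E eqxx mulr1 -/t subrr mulr0.
have p'o j : j != jk -> p' ord0 j = (1 - t)^-1 * p ord0 j.
  by move=> njk; rewrite p'E (negbTE njk) mulr0 subr0.
have Dp' : Delta p'.
  split=> [j|].
    case: (eqVneq j jk) => [->|njk]; first by rewrite p'jk.
    by rewrite p'o // mulr_ge0 ?invr_ge0 ?(ltW ht) ?(Dp.1 j).
  rewrite (bigD1 jk) //= p'jk add0r.
  rewrite (eq_bigr (fun i => (1 - t)^-1 * p ord0 i)); last by move=> i; exact: p'o.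
  rewrite -mulr_sumr; have -> : \sum_(i | i != jk) p ord0 i = 1 - t by lra.
  by rewrite mulVf // gt_eqF.
have hs' (j : 'I_m) : (k <= j)%N -> p' ord0 j = 0.
  move=> kj; case: (eqVneq j jk) => [->|njk]; first exact: p'jk.
  rewrite p'o // hs ?mulr0 //.
  rewrite ltn_neqAle kj andbT; apply: contra njk => /eqP kj'.
  by apply/eqP/val_inj => /=; rewrite kj'.
have eqp : p = t *: evec jk + (1 - t) *: p'.
  apply/rowP => j.
  by rewrite !mxE mulrA (mulfV (lt0r_neq0 ht)) mul1r addrC subrK.
have tb : 0 <= t <= 1 by rewrite t0 t1.
have := om_convex (@evec_Delta R m jk) Dp' tb; rewrite -eqp => h.
apply: (le_trans h).
have := IH _ Dp' hs'; have := hMx jk.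
nra.
Qed.
Lemma small_scale (a d1 d2 : R) : 0 <= a -> 0 < d1 -> 0 < d2 ->
  exists l : R, [/\ 0 < l, l <= 1, l * a < d1 & l * a < d2].
Proof.
move=> a0 d10 d20.
have aux d : 0 < d -> [/\ 0 < d / (d + a), d / (d + a) <= 1 & d / (d + a) * a < d].
  move=> d0; have da : 0 < d + a by rewrite ltr_wpDr.
  split; first by rewrite divr_gt0.
    by rewrite ler_pdivrMr // mul1r lerDl.
  by rewrite mulrAC ltr_pdivrMr // ltr_pM2l // ltrDr.
have [x10 x11 x1a] := aux _ d10; have [x20 x21 x2a] := aux _ d20.
exists (d1 / (d1 + a) * (d2 / (d2 + a))); split.
- exact: mulr_gt0.
- by rewrite mulr_ile1 // ltW.
- rewrite mulrAC; apply: le_lt_trans x1a; apply: ler_piMr => //.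
  exact: mulr_ge0 (ltW x10) a0.
- rewrite -mulrA; apply: le_lt_trans x2a; apply: ler_piMl => //.
  exact: mulr_ge0 (ltW x20) a0.
Qed.

Lemma subgrad_small p0 s w : I p0 ->
  (forall p, Delta p -> om p0 - dotv s p0 <= om p - dotv s p) -> L_Delta w ->
  forall e : R, 0 < e -> exists l : R,
    [/\ 0 < l, l <= 1 & om (p0 + l *: w) - om p0 - l * dotv s w <= l * e].
Proof.
move=> Ip0 hsub Lw e e0.
have [g [Lg [_ hg]]] := leg_grad Ip0.
have [_ [Hp0 [r r0 hr]]] := Ip0.
have nw0 := enorm_ge0 w.
set eps := e / (2 * (enorm w + 1)).
have eps0 : 0 < eps by rewrite divr_gt0 // mulr_gt0 // ltr_wpDl.
have epsE : eps * (2 * (enorm w + 1)) = e.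
  by rewrite /eps divfK // gt_eqF // mulr_gt0 // ltr_wpDl.
have epsw : 2 * (eps * enorm w) <= e by rewrite -epsE; nra.
have [d d0 hd] := hg eps eps0.
have [l [l0 l1 ld lr]] := small_scale nw0 d0 r0.
exists l; split => //.
have hv1 := hd (l *: w) (L_Z l Lw).
rewrite enormZ (gtr0_norm l0) in hv1; have [_ h1] := hv1 ld.
have hv2 := hd ((- l) *: w) (L_Z (- l) Lw).
rewrite enormZ normrN (gtr0_norm l0) in hv2; have [_ h2] := hv2 ld.
have Dm : Delta (p0 + (- l) *: w).
  apply: hr; first exact: HL_H (L_Z _ Lw).
  by rewrite addrC addKr enormZ normrN (gtr0_norm l0).
have := hsub _ Dm.
rewrite dotvDr !dotvZr in h1 h2 *.
move: h1 h2; rewrite /om.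
rewrite !ler_norml => /andP[_ h1] /andP[_ h2] h3.
have : l * (2 * (eps * enorm w)) <= l * e by rewrite ler_pM2l.
nra.
Qed.
Variable N : nat.
Hypothesis HN : (0 < N)%N.
Variable kappa : R.
Hypothesis Hk : 0 < kappa.
Variable gam : 'I_N -> 'rV[R]_m.
Variable Psi : 'rV[R]_m -> \bar R.
Hypothesis HOmPsi : forall q, Om q = (Psi q + ind_set (@Delta R m) q)%E.
Hypothesis Hjensen : convex_on_Delta_ot (@jensen_gap R N m Psi).

Implicit Types (q Q : 'I_N -> 'rV[R]_m) (s : 'rV[R]_m).

Definition qbar q : 'rV[R]_m := N%:R^-1 *: \sum_(i < N) q i.
Definition Gf s q := N%:R^-1 * \sum_(i < N)
  (dotv (gam i) (q i) + kappa * (om (q i) + os s - dotv s (q i))).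
Definition Wf s p := os s - dotv s p + om p.
Definition Lf q := N%:R^-1 * \sum_(i < N) dotv (gam i) (q i).
Definition Jf q := N%:R^-1 * \sum_(i < N) om (q i) - om (qbar q).
Definition Phi q := Lf q + kappa * Jf q.

Lemma N0 : (N%:R : R) != 0.
Proof. by rewrite pnatr_eq0 -lt0n. Qed.

Lemma dot_qbar s q : dotv s (qbar q) = N%:R^-1 * \sum_(i < N) dotv s (q i).
Proof. by rewrite /qbar dotvZr dotv_sumr. Qed.

Lemma qbar_Delta q : Delta_ot q -> Delta (qbar q).
Proof.
move=> Dq; split=> [j|].
  rewrite /qbar !mxE summxE mulr_ge0 ?invr_ge0 ?ler0n //.
  by apply: sumr_ge0 => i _; exact: (Dq i).1.
rewrite (eq_bigr (fun j => N%:R^-1 * \sum_(i < N) q i ord0 j)); last first.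
  by move=> j _; rewrite /qbar !mxE summxE.
rewrite -mulr_sumr exchange_big /=.
rewrite (eq_bigr (fun _ => 1)); last by move=> i _; exact: (Dq i).2.
by rewrite sumr_const card_ord mulVf // N0.
Qed.

Lemma G_decomp s q : Gf s q = Phi q + kappa * Wf s (qbar q).
Proof.
rewrite /Gf /Phi /Lf /Jf /Wf dot_qbar.
rewrite (eq_bigr (fun i => (dotv (gam i) (q i) + kappa * om (q i)) +
   (kappa * os s - kappa * dotv s (q i)))); last by move=> i _; ring.
rewrite big_split /= sumrB sumr_const card_ord big_split /= -!mulr_sumr.
rewrite -(mulr_natl (kappa * os s) N).
have := N0; move: (N%:R : R) => n n0.
by field.
Qed.

Lemma PsiE p : Delta p -> Psi p = (om p)%:E.
Proof.
move=> Dp; rewrite -(OmE Dp) HOmPsi /ind_set.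
by destruct (pselect (Delta p)) as [h|h]; [rewrite adde0 | exfalso; exact: h Dp].
Qed.

Lemma Jf_real q : Delta_ot q -> jensen_gap Psi q = (Jf q)%:E.
Proof.
move=> Dq; rewrite /jensen_gap -/(qbar q) (PsiE (qbar_Delta Dq)).
under eq_bigr => i _ do rewrite (PsiE (Dq i)).
by rewrite sumEFin -EFinM -EFinB.
Qed.

Definition comb l q Q := fun i => l *: q i + (1 - l) *: Q i.

Lemma comb_Delta l q Q : Delta_ot q -> Delta_ot Q -> 0 <= l <= 1 -> Delta_ot (comb l q Q).
Proof. by move=> Dq DQ hl i; apply: Delta_convex. Qed.

Lemma Lf_comb l q Q : Lf (comb l q Q) = l * Lf q + (1 - l) * Lf Q.
Proof.
rewrite /Lf /comb.
under eq_bigr => i _ do rewrite dotvDr !dotvZr.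
by rewrite big_split /= -!mulr_sumr; ring.
Qed.

Lemma Phi_convex l q Q : Delta_ot q -> Delta_ot Q -> 0 <= l <= 1 ->
  Phi (comb l q Q) <= l * Phi q + (1 - l) * Phi Q.
Proof.
move=> Dq DQ hl.
have := Hjensen Dq DQ hl.
rewrite -/(comb l q Q) !Jf_real //; last exact: comb_Delta.
move=> hJ0.
have hJ : Jf (comb l q Q) <= l * Jf q + (1 - l) * Jf Q.
  by move: hJ0; rewrite -EFinM -EFinM -EFinD lee_fin.
rewrite /Phi Lf_comb.
have := ler_wpM2l (ltW Hk) hJ.
lra.
Qed.

Lemma qbar_comb l q Q : qbar (comb l q Q) = qbar Q + l *: (qbar q - qbar Q).
Proof.
apply/rowP => j; rewrite /qbar /comb !mxE !summxE.
under eq_bigr => i _ do rewrite !mxE.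
rewrite big_split /= -!mulr_sumr; ring.
Qed.
Lemma W_ge0 s p : Delta p -> 0 <= Wf s p.
Proof. by move=> Dp; have := os_lb s Dp; rewrite /Wf; lra. Qed.

Definition upd q i p := fun k => if k == i then p else q k.

Lemma step s s' Q : Delta_ot Q ->
  (forall q, Delta_ot q -> Gf s Q <= Gf s q) ->
  (forall t, Gf s' Q <= Gf t Q) ->
  [/\ I (qbar Q), Wf s' (qbar Q) = 0 &
      forall q, Delta_ot q -> Gf s' Q + kappa * Wf s' (qbar q) <= Gf s q].
Proof.
move=> DQ hQ hs'.
have k0 : kappa != 0 by rewrite gt_eqF.
have IQi i : I (Q i).
  apply: (@min_in_I _ (s - kappa^-1 *: gam i) (DQ i)) => p Dp.
  have Dq : Delta_ot (upd Q i p) by move=> k; rewrite /upd; case: eqP => // _.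
  have := hQ _ Dq; rewrite /Gf ler_pM2l ?invr_gt0 ?ltr0n //.
  rewrite (bigD1 i) //= [X in _ <= X](bigD1 i) //= {2}/upd eqxx.
  have rest : \sum_(k < N | k != i) (dotv (gam k) (upd Q i p k) +
       kappa * (om (upd Q i p k) + os s - dotv s (upd Q i p k))) =
     \sum_(k < N | k != i) (dotv (gam k) (Q k) + kappa * (om (Q k) + os s - dotv s (Q k))).
    by apply: eq_bigr => k /negbTE kn; rewrite /upd kn.
  rewrite rest.
  rewrite lerD2r => h.
  have eb x : kappa * (om x - dotv (s - kappa^-1 *: gam i) x) =
              kappa * (om x - dotv s x) + dotv (gam i) x.
    by rewrite dotvBl dotvZl; field.
  by rewrite -(ler_pM2l Hk) !eb; move: h; rewrite /upd eqxx; lra.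
have IQ : I (qbar Q).
  apply: pos_I => [|j]; first exact: (qbar_Delta DQ).2.
  rewrite /qbar !mxE summxE mulr_gt0 ?invr_gt0 ?ltr0n //.
  rewrite (bigD1 (Ordinal HN)) //= ltr_wpDr //; last exact: I_pos.
  by apply: sumr_ge0 => i _; exact: (DQ i).1.
have DQb := qbar_Delta DQ.
have W0 : Wf s' (qbar Q) = 0.
  have [g hg] := leg_grad IQ.
  have Wg : Wf g (qbar Q) = 0 by rewrite /Wf (os_grad IQ hg); ring.
  have := hs' g; rewrite !G_decomp Wg mulr0 addr0 -[X in _ <= X]addr0 lerD2l.
  rewrite pmulr_rle0 // => h; apply/eqP; rewrite eq_le h W_ge0 //.
split => // q Dq.
suff hE : Gf s Q - kappa * Wf s' (qbar Q) <= Gf s q - kappa * Wf s' (qbar q).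
  rewrite W0 mulr0 subr0 in hE.
  have := G_decomp s' Q; rewrite W0 mulr0 addr0 => ->.
  have := G_decomp s Q; have := W_ge0 s DQb; have := Hk.
  move: hE; rewrite G_decomp; nra.
apply/ler_addgt0Pr => e e0.
set w := qbar q - qbar Q.
have Lw : L_Delta w by apply: H_L; [exact: (qbar_Delta Dq).2 | exact: DQb.2].
have hsub p : Delta p -> om (qbar Q) - dotv s' (qbar Q) <= om p - dotv s' p.
  by move=> Dp; have := W_ge0 s' Dp; move: W0; rewrite /Wf; lra.
have [l [l0 l1 hl]] := subgrad_small IQ hsub Lw (divr_gt0 e0 Hk).
have lb : 0 <= l <= 1 by rewrite ltW.
have Dl := comb_Delta Dq DQ lb.
have h1 := hQ _ Dl.
have hc := Phi_convex Dq DQ lb.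
rewrite !G_decomp qbar_comb -/w in h1 *.
have e1 x : dotv x (qbar Q + l *: w) = dotv x (qbar Q) + l * (dotv x (qbar q) - dotv x (qbar Q)).
  by rewrite dotvDr (dotvZr l) /w dotvBr.
move: h1 hc hl W0; rewrite /Wf !e1 /w dotvBr.
set a1 := dotv s (qbar Q); set a2 := dotv s (qbar q).
set b1 := dotv s' (qbar Q); set b2 := dotv s' (qbar q).
set oc := om (qbar Q + l *: (qbar q - qbar Q)).
set PQ := Phi Q; set Pq := Phi q; set Pl := Phi (comb l q Q).
move=> h1 hc hl W0.
have hl' : kappa * (oc - om (qbar Q) - l * (b2 - b1)) <= l * e.
  have := ler_wpM2l (ltW Hk) hl.
  have -> : kappa * (l * (e / kappa)) = l * e by field.
  by [].
have key : l * (PQ + kappa * (os s - a1 + om (qbar Q)) - kappa * (os s' - b1 + om (qbar Q)))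
   <= l * (Pq + kappa * (os s - a2 + om (qbar q)) - kappa * (os s' - b2 + om (qbar q)) + e).
  nra.
by rewrite ler_pM2l // in key.
Qed.
Lemma main_real (sg : nat -> 'rV[R]_m) (q : nat -> 'I_N -> 'rV[R]_m) :
  (forall t, Delta_ot (q t.+1) /\
     forall q', Delta_ot q' -> Gf (sg t) (q t.+1) <= Gf (sg t) q') ->
  (forall t (u : 'rV[R]_m), Gf (sg t.+1) (q t.+1) <= Gf u (q t.+1)) ->
  exists C : R, forall t, (0 < t)%N -> forall q', Delta_ot q' ->
    Gf (sg t) (q t) <= Phi q' + C / t%:R.
Proof.
move=> H2 H3.
have [M hM] := om_ub.
set C := kappa * (os (sg 0%N) + \sum_j `|sg 0%N ord0 j| + M).
exists C => T T0 q' Dq'.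
set p := qbar q'.
have Dp := qbar_Delta Dq'.
have st t := step (H2 t).1 (H2 t).2 (H3 t).
set h := fun t => Gf (sg t) (q t).
have mono t : (0 < t)%N -> h t.+1 <= h t.
  case: t => // t _.
  have [_ _ h3] := st t.+1.
  have := h3 _ (H2 t).1.
  have := mulr_ge0 (ltW Hk) (W_ge0 (sg t.+2) (qbar_Delta (H2 t).1)).
  rewrite /h; lra.
have key t : h t.+1 + kappa * Wf (sg t.+1) p <= Phi q' + kappa * Wf (sg t) p.
  have [_ _ h3] := st t.
  by have := h3 _ Dq'; rewrite [Gf (sg t) q']G_decomp.
have claim n : n%:R * (h n - Phi q') <= kappa * Wf (sg 0%N) p - kappa * Wf (sg n) p.
  elim: n => [|n IH]; first by rewrite mul0r subrr.
  have hm : n%:R * h n.+1 <= n%:R * h n.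
    case: n IH => [|n] IH; first by rewrite !mul0r.
    by rewrite ler_wpM2l // mono.
  have := key n.
  rewrite -natr1 mulrDl mul1r.
  lra.
have W0b : Wf (sg 0%N) p <= os (sg 0%N) + \sum_j `|sg 0%N ord0 j| + M.
  rewrite /Wf; have := dotv_Delta_le (sg 0%N) Dp; rewrite ler_norml => /andP[a1 _].
  have := hM _ Dp; lra.
have WT := W_ge0 (sg T) Dp.
have T0' : 0 < (T%:R : R) by rewrite ltr0n.
rewrite -lerBlDl ler_pdivlMr // mulrC.
have := claim T; have := ler_wpM2l (ltW Hk) W0b; rewrite -/C.
have := ler_wpM2l (ltW Hk) WT.
move=> a b c; rewrite /h /p mulr0 in a b c *; lra.
Qed.
Lemma Phi_le_G s q : Delta_ot q -> Phi q <= Gf s q.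
Proof.
move=> Dq; rewrite G_decomp lerDl.
exact: mulr_ge0 (ltW Hk) (W_ge0 s (qbar_Delta Dq)).
Qed.

Lemma SN_E (sv : 'I_N -> 'rV[R]_m) q : Sbar_ot sv -> Delta_ot q ->
  SN Om kappa gam sv q = (Gf (sv (Ordinal HN)) q)%:E.
Proof.
move=> Ss Dq; rewrite /SN /Gf.
under eq_bigr => i _ do
  rewrite /Sfun /FY (OmE (Dq i)) (Ss i (Ordinal HN)) fconjE -EFinD.
by rewrite sumEFin -EFinM.
Qed.

End OmSec.

Lemma Delta_ot_of (R : realType) N m (q : nat -> 'I_N -> 'rV[R]_m) t
  (h : forall t, @Delta_ot R N m (q t.+1) /\ True) : (0 < t)%N -> Delta_ot (q t).
Proof. by case: t => // t _; exact: (h t).1. Qed.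

Unset Implicit Arguments.

Theorem theorem1 (R : realType) (d m N : nat)
  (y : 'I_m -> 'rV[R]_d)
  (Hy_inj : injective y)
  (Hy_ext : forall j : 'I_m, ~ exists lam : 'I_m -> R,
      (forall k, 0 <= lam k) /\ lam j = 0 /\ \sum_(k < m) lam k = 1 /\
      y j = \sum_(k < m) lam k *: y k)
  (kappa : R) (Hkappa : 0 < kappa)
  (Xi : Type) (xi : 'I_N -> Xi) (c : 'rV[R]_d -> Xi -> R)
  (HN : (0 < N)%N)
  (Om Psi : 'rV[R]_m -> \bar R)
  (HOm_proper : proper_fun Om) (HOm_lsc : lsc_fun Om) (HOm_cvx : convex_fun Om)
  (HOm_dom : dom Om = @Delta R m)
  (HOm_leg : legendre_on (@H_Delta R m) (@L_Delta R m) Om)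
  (HOm_Psi : forall q, Om q = (Psi q + ind_set (@Delta R m) q)%E)
  (HPsi_leg : legendre Psi)
  (Hjensen : convex_on_Delta_ot (@jensen_gap R N m Psi))
  (s : nat -> ('I_N -> 'rV[R]_m)) (q : nat -> ('I_N -> 'rV[R]_m)) :
  let gam : 'I_N -> 'rV[R]_m := fun i => \row_(j < m) c (y j) (xi i) in
  @Sbar_ot R N m (s 0%N) ->
  (forall t : nat,
     @Delta_ot R N m (q t.+1) /\
     forall q' : 'I_N -> 'rV[R]_m, @Delta_ot R N m q' ->
       (SN Om kappa gam (s t) (q t.+1) <= SN Om kappa gam (s t) q')%E) ->
  (forall t : nat,
     @Sbar_ot R N m (s t.+1) /\
     forall s' : 'I_N -> 'rV[R]_m, @Sbar_ot R N m s' ->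
       (SN Om kappa gam (s t.+1) (q t.+1) <= SN Om kappa gam s' (q t.+1))%E) ->
  exists C : R, exists T : nat, forall t : nat, (T < t)%N ->
    (SN Om kappa gam (s t) (q t)
     - ereal_inf [set SN Om kappa gam s' q' | s' in @Sbar_ot R N m & q' in @Delta_ot R N m]
     <= (C / t%:R)%:E)%E.
Proof.
move=> gam Hs0 H2 H3.
have Hninf : forall x, (-oo < Om x)%E by move=> x; exact: HOm_proper.2.
have Hm : (0 < m)%N.
  have [x hx] := HOm_proper.1.
  have : dom Om x by exact: hx.
  by rewrite HOm_dom => /Delta_m0.
set i0 := Ordinal HN.
set sg := fun t => s t i0.
have Ss t : Sbar_ot (s t) by case: t => [|t]; [exact: Hs0 | exact: (H3 t).1].
have sgE t : Sbar_ot (s t) -> True by [].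
have SNE := SN_E HOm_cvx HOm_dom HOm_leg Hninf Hm HN kappa gam.
have H2' t : Delta_ot (q t.+1) /\
    forall q', Delta_ot q' -> Gf Om kappa gam (sg t) (q t.+1) <= Gf Om kappa gam (sg t) q'.
  have [D h] := H2 t; split => // q' Dq'.
  by have := h q' Dq'; rewrite !SNE // lee_fin.
have H3' t (u : 'rV[R]_m) : Gf Om kappa gam (sg t.+1) (q t.+1) <= Gf Om kappa gam u (q t.+1).
  have [_ h] := H3 t.
  have Su : Sbar_ot (fun _ : 'I_N => u) by [].
  have Dt := (H2 t).1; have St := Ss t.+1.
  by have := h _ Su; rewrite !SNE // lee_fin.
have [C hC] := main_real HOm_cvx HOm_dom HOm_leg Hninf Hm HN Hkappa HOm_Psi Hjensen H2' H3'.
exists C, 0%N => t t0.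
have Dt : Delta_ot (q t) by case: t t0 => // t _; exact: (H2 t).1.
rewrite SNE // lee_subel_addr //.
set x := Gf Om kappa gam (s t i0) (q t).
have hinf : ((x - C / t%:R)%:E <= ereal_inf
    [set SN Om kappa gam s' q' | s' in @Sbar_ot R N m & q' in @Delta_ot R N m])%E.
  apply: le_ereal_inf_tmp => _ [s' Ss' [q' Dq' <-]].
  rewrite SNE // lee_fin.
  have := hC t t0 q' Dq'.
  have := Phi_le_G HOm_cvx HOm_dom HOm_leg Hninf Hm HN Hkappa gam (s' i0) Dq'.
  rewrite /x -/(sg t); lra.
have -> : x%:E = ((C / t%:R)%:E + (x - C / t%:R)%:E)%E by rewrite -EFinD; congr (_%:E); ring.
exact: leeD2l.
Qed.
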